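(* Let $0<\epsilon<1$ and let $\bar b,\bar w>0$ satisfy $b/2\le \bar b\le 2b$ and $w/6\le \bar w\le 6w$. Then the number of butterflies of $G$ all four of whose edges are non-light (with respect to $\bar b,\bar w,\epsilon$) is at most $c_H\epsilon b$, where $c_H=1.77\times 10^4$.
   Context: Let $G=(V,E)$ be a bipartite graph with bipartition $V=U\cup L$ and $m=|E|$ edges; $d_v$ is the degree of vertex $v$, and for an edge $e=(u,v)$ let $d_e=d_u+d_v-2$. A wedge is a path with two edges; $w$ is the number of wedges of $G$. A butterfly is a set $\{u_1,u_2,v_1,v_2\}$ of distinct vertices with $u_1,u_2\in U$, $v_1,v_2\in L$ such that all four pairs $u_iv_j$ are edges; its edges are these four edges. $b$ is the number of butterflies and $b(e)$ the number of butterflies containing edge $e$. Given $\bar b,\bar w,\epsilon>0$, an edge $e$ is heavy if $b(e)>2\bar b^{3/4}/\epsilon^{1/4}$ or $d_e>\bar w/(\epsilon\bar b)^{1/4}$; it is light if $b(e)<\bar b^{3/4}/(2\epsilon^{1/4})$ and $d_e<\bar w/(\epsilon\bar b)^{1/4}$. An edge is non-light if it is not light (an edge may be neither heavy nor light). *)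

(* Defs.v *)
From HB Require Import structures.
From mathcomp Require Import all_boot all_order all_algebra.
From mathcomp Require Import all_classical all_reals all_analysis.
Set Implicit Arguments. Unset Strict Implicit. Unset Printing Implicit Defensive.
Import Order.TTheory GRing.Theory Num.Theory.
Local Open Scope ring_scope.

Section Bip.
Variables (U L : finType) (E : U -> L -> bool).

Definition edges : {set U * L} := [set e | E e.1 e.2].
Definition m : nat := #|edges|.

Definition degU (u : U) : nat := #|[set v | E u v]|.
Definition degL (v : L) : nat := #|[set u | E u v]|.

Definition dedge (R : realType) (e : U * L) : R :=
  (degU e.1)%:R + (degL e.2)%:R - 2.

Definition wedges : {set {set U * L}} :=
  [set S : {set U * L} | [&& S \subset edges, #|S| == 2 &
      [exists e1 in S, exists e2 in S,
         (e1 != e2) && ((e1.1 == e2.1) || (e1.2 == e2.2))]]].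
Definition w : nat := #|wedges|.

(* A butterfly {u1,u2,v1,v2}: a 2-subset A of U and a 2-subset B of L with all
   four pairs being edges; its edges are the pairs in A x B. *)
Definition butterflies : {set {set U} * {set L}} :=
  [set AB : {set U} * {set L} | [&& #|AB.1| == 2, #|AB.2| == 2 &
      [forall u in AB.1, forall v in AB.2, E u v]]].
Definition b : nat := #|butterflies|.

Definition bflyE (AB : {set U} * {set L}) : {set U * L} := finset.setX AB.1 AB.2.

Definition b_e (e : U * L) : nat := #|[set AB in butterflies | e \in bflyE AB]|.

Definition heavy (R : realType) (bb ww eps : R) (e : U * L) : bool :=
  ((b_e e)%:R > 2 * bb `^ (3/4) / eps `^ (1/4)) ||
  (dedge R e > ww / (eps * bb) `^ (1/4)).
Definition light (R : realType) (bb ww eps : R) (e : U * L) : bool :=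
  ((b_e e)%:R < bb `^ (3/4) / (2 * eps `^ (1/4))) &&
  (dedge R e < ww / (eps * bb) `^ (1/4)).
Definition nonlight (R : realType) (bb ww eps : R) (e : U * L) : bool :=
  ~~ light bb ww eps e.

Definition nonlight_butterflies (R : realType) (bb ww eps : R) :=
  [set AB in butterflies | [forall e in bflyE AB, nonlight bb ww eps e]].
End Bip.

(* Main.v *)
Require Import Defs.
From HB Require Import structures.
From mathcomp Require Import all_boot all_order all_algebra.
From mathcomp Require Import all_classical all_reals all_analysis.
From mathcomp Require Import ring lra.
Import Order.TTheory GRing.Theory Num.Theory.
Set Implicit Arguments. Unset Strict Implicit. Unset Printing Implicit Defensive.

Section Comb.
Variables (U L : finType) (E : U -> L -> bool).

Lemma bfly_card AB : AB \in butterflies E -> #|bflyE AB| = 4.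
Proof. by rewrite inE => /and3P[/eqP h1 /eqP h2 _]; rewrite /bflyE cardsX h1 h2. Qed.

Lemma sum_be : (\sum_(e : U * L) b_e E e = 4 * b E)%N.
Proof.
rewrite /b_e.
under eq_bigr => e _ do rewrite -sum1_card big_mkcond /=.
rewrite exchange_big /= /b -sum1_card big_distrr /=.
rewrite [in RHS]big_mkcond /=; apply: eq_bigr => AB _.
case: (boolP (AB \in butterflies E)) => hAB.
  rewrite muln1 -(bfly_card hAB) -sum1_card [RHS]big_mkcond /=.
  by apply: eq_bigr => e _; rewrite inE hAB.
by apply: big1 => e _; rewrite inE (negbTE hAB).
Qed.

Lemma be_le_b e : (b_e E e <= b E)%N.
Proof. rewrite /b_e /b; apply: subset_leq_card; apply/fintype.subsetP => AB; by rewrite inE => /andP[]. Qed.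


Definition A1 (e : U * L) : {set U * L} := [set (e.1, v) | v in [set v | E e.1 v] :\ e.2].
Definition A2 (e : U * L) : {set U * L} := [set (u, e.2) | u in [set u | E u e.2] :\ e.1].
Definition We (e : U * L) : {set {set U * L}} := [set [set e; f] | f in A1 e :|: A2 e].

Lemma A12P e f : f \in A1 e :|: A2 e ->
  [/\ E f.1 f.2, f != e & (f.1 == e.1) || (f.2 == e.2)].
Proof.
rewrite finset.in_setU => /orP[] /imsetP[x]; rewrite !inE => /andP[hx hE] ->.
  by rewrite /= hE eqxx; split=> //; apply/negP => /eqP h; move: hx; rewrite -h /= eqxx.
by rewrite /= hE eqxx orbT; split=> //; apply/negP => /eqP h; move: hx; rewrite -h /= eqxx.
Qed.

Lemma card_We e : E e.1 e.2 -> (degU E e.1 + degL E e.2 = #|We e| + 2)%N.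
Proof.
move=> he.
have hdisj : [disjoint A1 e & A2 e].
  rewrite -setI_eq0; apply/eqP/setP => f; rewrite !inE.
  apply/negP => /andP[/imsetP[v hv ->] /imsetP[u hu [_ hv2]]].
  by move: hv; rewrite !inE hv2 eqxx.
have hA1 : #|A1 e| = #|[set v | E e.1 v] :\ e.2|.
  by rewrite card_imset //; move=> v1 v2 [].
have hA2 : #|A2 e| = #|[set u | E u e.2] :\ e.1|.
  by rewrite card_imset //; move=> v1 v2 [].
have hW : #|We e| = #|A1 e :|: A2 e|.
  rewrite card_in_imset //; move=> f1 f2 h1 h2 heq.
  have [_ hne _] := A12P h1.
  have : f1 \in [set e; f2] by rewrite -heq !inE eqxx orbT.
  by rewrite !inE (negbTE hne) /= => /eqP.
rewrite hW cardsU (disjoint_setI0 hdisj) cards0 subn0 hA1 hA2.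
rewrite /degU /degL (cardsD1 e.2) (cardsD1 e.1) !inE he.
move: (#|_ :\ e.2|) (#|_ :\ e.1|) => a c.
by rewrite [true + a]addnC [true + c]addnC addnACA -addnA.
Qed.

Lemma We_wedge e W : E e.1 e.2 -> W \in We e -> W \in wedges E /\ e \in W.
Proof.
move=> he /imsetP[f hf ->]; have [hE hne hsh] := A12P hf.
split; last by rewrite !inE eqxx.
rewrite inE; apply/and3P; split.
- apply/fintype.subsetP => g; rewrite !inE => /orP[] /eqP -> /=; by rewrite ?he ?hE.
- by rewrite cards2 [e == f]eq_sym hne.
- apply/fintype.existsP; exists e; rewrite !inE eqxx /=.
  apply/fintype.existsP; exists f; rewrite !inE eqxx orbT /= eq_sym hne /=.
  by rewrite eq_sym [e.2 == _]eq_sym.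
Qed.

Lemma sum_We : (\sum_(e in edges E) #|We e| <= 2 * w E)%N.
Proof.
have -> : (\sum_(e in edges E) #|We e| =
   \sum_(W : {set U * L}) #|[set e in edges E | W \in We e]|)%N.
  under eq_bigr => e _ do rewrite -sum1_card big_mkcond /=.
  rewrite exchange_big /=; apply: eq_bigr => W _.
  rewrite -sum1_card [RHS]big_mkcond [LHS]big_mkcond /=; apply: eq_bigr => e _.
  by rewrite [in RHS]finset.in_set; case: (e \in edges E).
rewrite /w -sum1_card big_distrr /= [X in (_ <= X)%N]big_mkcond /=.
apply: leq_sum => W _.
case: (boolP (W \in wedges E)) => hW.
  rewrite muln1; apply: leq_trans (_ : #|W| <= 2)%N.
    apply: subset_leq_card; apply/fintype.subsetP => e; rewrite inE => /andP[he hWe].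
    by have [] := We_wedge (e := e) (W := W); rewrite // inE in he.
  by move: hW; rewrite inE => /and3P[_ /eqP -> _].
rewrite leqn0 cards_eq0; apply: contraR hW => /set0Pn[e].
rewrite finset.in_set => /andP[he hWe]; rewrite inE in he.
by have [-> _] := We_wedge he hWe.
Qed.

Section Bf.
Variable P : pred (U * L).
Let S := [set e in edges E | P e].
Let NB := [set AB in butterflies E | [forall e in bflyE AB, P e]].

Lemma NB_S AB : AB \in NB -> bflyE AB \subset S.
Proof.
rewrite inE => /andP[hAB /forall_inP hP]; apply/fintype.subsetP => e he.
rewrite inE hP // andbT inE.
move: hAB; rewrite inE => /and3P[_ _ /forall_inP hE].
move: he; case: e => a c; rewrite /bflyE finset.in_setX => /andP[h1 h2].
by have /forall_inP := hE _ h1; apply.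
Qed.

Lemma NB_4 : NB != finset.set0 -> (4 <= #|S|)%N.
Proof.
case/set0Pn => AB hAB; have := subset_leq_card (NB_S hAB).
by rewrite bfly_card //; move: hAB; rewrite inE => /andP[].
Qed.

Lemma NB_sq : (2 * #|NB| <= #|S| * #|S|)%N.
Proof.
pose P2 := [set p in finset.setX S S | enum_rank p.1.1 < enum_rank p.2.1]%N.
pose g (p : (U * L) * (U * L)) := ([set p.1.1; p.2.1], [set p.1.2; p.2.2]).
have h1 : (#|NB| <= #|P2|)%N.
  apply: leq_trans (leq_imset_card g P2).
  apply: subset_leq_card; apply/fintype.subsetP => AB hAB.
  have hS := NB_S hAB.
  move: hAB; rewrite inE => /andP[]; rewrite inE => /and3P[hA hB _] _.
  case/cards2P: hA => x [y [hxy hA]]; case/cards2P: hB => v1 [v2 [hv hB]].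
  have mem a c : a \in AB.1 -> c \in AB.2 -> (a, c) \in S.
    by move=> ha hc; apply: (fintype.subsetP hS); rewrite /bflyE finset.in_setX ha hc.
  have hx : x \in AB.1 by rewrite hA !inE eqxx.
  have hy : y \in AB.1 by rewrite hA !inE eqxx orbT.
  have h1 : v1 \in AB.2 by rewrite hB !inE eqxx.
  have h2 : v2 \in AB.2 by rewrite hB !inE eqxx orbT.
  have hr : enum_rank x != enum_rank y.
    by apply: contra hxy => /eqP /enum_rank_inj ->.
  case: (ltngtP (enum_rank x) (enum_rank y)) => hlt; last by move/val_inj: hlt hr => ->; rewrite eqxx.
    apply/imsetP; exists ((x, v1), (y, v2)).
      by rewrite inE finset.in_setX /= !mem.
    by rewrite /g /= -hA -hB; case: (AB).
  apply/imsetP; exists ((y, v1), (x, v2)).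
    by rewrite inE finset.in_setX /= !mem.
  by rewrite /g /= finset.setUC -hA -hB; case: (AB).
pose swp (p : (U * L) * (U * L)) := (p.2, p.1).
have swpK : cancel swp swp by case.
have hc : #|swp @: P2| = #|P2|.
  by rewrite card_imset //; exact: can_inj swpK.
have hdis : P2 :&: swp @: P2 = finset.set0.
  apply/eqP; rewrite -finset.subset0; apply/fintype.subsetP => p.
  rewrite finset.in_setI => /andP[hp /imsetP[q hq hpq]].
  move: hp hq; rewrite hpq !inE /= => /andP[_ h] /andP[_ h'].
  by move: (ltn_trans h h'); rewrite ltnn.
have hsub : P2 :|: swp @: P2 \subset finset.setX S S.
  apply/fintype.subsetP => p; rewrite finset.in_setU => /orP[|/imsetP[q hq ->]].
    by rewrite inE => /andP[].
  by move: hq; case: q => a c; rewrite !inE /= => /andP[/andP[-> ->]].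
have := subset_leq_card hsub; rewrite cardsU hdis cards0 subn0 hc cardsX => h2.
by rewrite mul2n -addnn; exact: leq_trans (leq_add h1 h1) h2.
Qed.
End Bf.


Lemma sum_sub (T : finType) (A B : {pred T}) (f : T -> nat) :
  {subset A <= B} -> (\sum_(i in A) f i <= \sum_(i in B) f i)%N.
Proof.
move=> hAB; rewrite big_mkcond [X in (_ <= X)%N]big_mkcond /=.
apply: leq_sum => i _; case: (boolP (i \in A)) => hi; first by rewrite (hAB _ hi).
by case: (i \in B).
Qed.
End Comb.

Local Open Scope ring_scope.

Lemma pow_facts (R : realType) (eps bb : R) : 0 < eps -> 0 < bb ->
  let x := (eps * bb) `^ (1/4) in
  [/\ 0 < x, x ^+ 4 = eps * bb &
      bb `^ (3/4) / (2 * eps `^ (1/4)) = bb / (2 * x)].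
Proof.
move=> he hb x.
have hx : 0 < x by apply: powR_gt0; exact: mulr_gt0.
split => //.
  by rewrite -powR_mulrn ?ltW // /x -powRrM mulrC divfK ?powRr1 // ?mulr_ge0 ?ltW.
rewrite /x powRM ?ltW //.
have he' : 0 < eps `^ (1/4) by apply: powR_gt0.
have hb' : 0 < bb `^ (1/4) by apply: powR_gt0.
have : bb `^ (3/4) * bb `^ (1/4) = bb.
  rewrite -powRD; last by apply/implyP => _; rewrite gt_eqF.
  have -> : (3/4 + 1/4 : R) = 1 by field.
  by rewrite powRr1 // ltW.
move: he' hb'; set p := bb `^ (1/4); set q := bb `^ (3/4); set e := eps `^ (1/4).
move=> he' hb' H; rewrite -[in RHS]H.
by field; rewrite ?gt_eqF.
Qed.

Lemma arith_final (R : realType) (eps bb ww x b w N N1 N2 K : R) :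
  0 < eps -> 0 < bb -> 0 < ww -> b / 2 <= bb -> bb <= 2 * b -> w <= 6 * ww ->
  0 < x -> x ^+ 4 = eps * bb -> 0 <= N -> 0 <= N1 -> 0 <= N2 -> 0 <= K ->
  N <= N1 + N2 -> N1 * (bb / (2 * x)) <= 4 * b -> N2 * (ww / x) <= 2 * w ->
  2 * K <= N ^+ 2 -> (0 < K -> 4 <= N) -> (x < 1/4 -> N1 = 0) ->
  K <= 17700 * eps * b.
Proof.
move=> he hb hw hb1 hb2 hw1 hx hx4 hn hN1 hN2 hK hN h1 h2 hKN hK4 hsmall.
have h1' : N1 <= 16 * x.
  have : N1 * bb <= 8 * b * x.
    have := h1; rewrite mulrA ler_pdivrMr ?mulr_gt0 //; lra.
  move=> H; have : N1 * bb <= 16 * x * bb by nra.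
  by rewrite ler_pM2r.
have h2' : N2 <= 12 * x.
  have : N2 * ww <= 2 * w * x.
    have := h2; rewrite mulrA ler_pdivrMr //.
  move=> H; have : N2 * ww <= 12 * x * ww by nra.
  by rewrite ler_pM2r.
have hepsb : 0 <= 17700 * eps * b by nra.
case: (ltP x (1/4)) => hx1.
  rewrite hsmall // in hN.
  case: (ltP 0 K) => hK0; last by lra.
  have := hK4 hK0; lra.
have hN0 : N <= 28 * x by lra.
have hNsq : N ^+ 2 <= 784 * x ^+ 2.
  have : N * N <= N * (28 * x) by exact: ler_wpM2l.
  rewrite expr2 => H1.
  have : N * (28 * x) <= (28 * x) * (28 * x) by rewrite ler_wpM2r // mulr_ge0 // ltW.
  rewrite expr2; lra.
have : x ^+ 2 <= 16 * x ^+ 4.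
  have : 1/16 <= x ^+ 2 by nra.
  rewrite [x ^+ 4](_ : _ = x ^+ 2 * x ^+ 2); last by rewrite -exprD.
  nra.
rewrite hx4 => H.
nra.
Qed.


Theorem proposition1 (R : realType) (U L : finType) (E : U -> L -> bool)
  (eps bb ww : R) :
  0 < eps -> eps < 1 -> 0 < bb -> 0 < ww ->
  (b E)%:R / 2 <= bb -> bb <= 2 * (b E)%:R ->
  (w E)%:R / 6 <= ww -> ww <= 6 * (w E)%:R ->
  (#|nonlight_butterflies E bb ww eps|)%:R <= 17700 * eps * (b E)%:R.
Proof.
move=> he he1 hb hw hb1 hb2 hw1 hw2.
have [hx hx4 ht] := pow_facts he hb.
set x := (eps * bb) `^ (1/4) in hx hx4 ht.
set t := bb `^ (3/4) / (2 * eps `^ (1/4)) in ht.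
pose P := nonlight E bb ww eps.
pose S := [set e in edges E | P e].
pose S1 := [set e in edges E | t <= (b_e E e)%:R].
pose S2 := [set e in edges E | ww / x <= (#|We E e|)%:R].
have hde e : E e.1 e.2 -> dedge E R e <= (#|We E e|)%:R.
  move=> hE; rewrite /dedge -natrD (card_We hE) natrD; lra.
have hN : (#|S| <= #|S1| + #|S2|)%N.
  apply: leq_trans (leq_card_setU S1 S2).
  apply: subset_leq_card; apply/fintype.subsetP => e.
  rewrite !finset.in_set => /andP[hE hP].
  move: hP; rewrite /P /nonlight /light negb_and -!leNgt => /orP[h|h].
    by rewrite hE h.
  rewrite hE /= orbC; apply/orP; left.
  by apply: le_trans h _; apply: hde.
have h1 : (#|S1|)%:R * t <= 4 * (b E)%:R.
  have -> : (#|S1|)%:R * t = \sum_(e in S1) t by rewrite sumr_const mulr_natl.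
  apply: le_trans (_ : \sum_(e in S1) ((b_e E e)%:R : R) <= _).
    by apply: ler_sum => e; rewrite finset.in_set => /andP[_ h].
  rewrite -natr_sum -natrM ler_nat -sum_be.
  rewrite big_mkcond [X in (_ <= X)%N]big_mkcond /=.
  by apply: leq_sum => e _; case: (e \in S1).
have h2 : (#|S2|)%:R * (ww / x) <= 2 * (w E)%:R.
  have -> : (#|S2|)%:R * (ww / x) = \sum_(e in S2) (ww / x) by rewrite sumr_const mulr_natl.
  apply: le_trans (_ : \sum_(e in S2) ((#|We E e|)%:R : R) <= _).
    by apply: ler_sum => e; rewrite finset.in_set => /andP[_ h].
  rewrite -natr_sum -natrM ler_nat; apply: leq_trans (sum_We E).
  by apply: sum_sub => e; rewrite finset.in_set => /andP[].
have hsmall : x < 1/4 -> #|S1| = 0%N.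
  move=> hx1; apply/eqP; rewrite cards_eq0; apply/negPn/negP => /set0Pn[e].
  rewrite finset.in_set => /andP[_ h].
  have hbe : ((b_e E e)%:R : R) <= (b E)%:R by rewrite ler_nat be_le_b.
  have : 2 * bb < t.
    rewrite ht ltr_pdivlMr ?mulr_gt0 //; nra.
  lra.
have hKN := NB_sq E P.
have hK4 := @NB_4 U L E P.
rewrite ht in h1.
apply: (@arith_final R eps bb ww x (b E)%:R (w E)%:R (#|S|)%:R (#|S1|)%:R (#|S2|)%:R (#|nonlight_butterflies E bb ww eps|)%:R) => //.
- lra.
- by rewrite -natrD ler_nat.
- by rewrite -natrM -natrX ler_nat expnS expn1.
- move=> hK; rewrite ler_nat; apply: hK4.
  by rewrite -card_gt0 -(ltr0n R).
- by move=> /hsmall ->.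
Qed.
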